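(* Let $B_k$ denote the number of minimal blocking sets of $\operatorname{PG}(2,q)$ of size $k$. Then for all integers $k$ with $q \leq k \leq 2q$, \[B_k \leq \frac{\binom{q^2 + q + 1}{2k - 2q}}{\binom{k}{2k-2q}}.\]
   Context: $q$ is a prime power and $\operatorname{PG}(2,q)$ is the incidence structure of the $q^2+q+1$ points and $q^2+q+1$ lines of $\mathbb{P}^2$ defined over $\mathbb{F}_q$. A blocking set is a set of points of $\operatorname{PG}(2,q)$ meeting every line of $\operatorname{PG}(2,q)$; it is minimal if no proper subset of it is a blocking set. *)

(* Defs.v *)
From HB Require Import structures.
From mathcomp Require Import all_boot all_order all_algebra.
Set Implicit Arguments. Unset Strict Implicit. Unset Printing Implicit Defensive.
Import GRing.Theory Num.Theory.
Local Open Scope ring_scope.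

Section PG.
Variable F : finFieldType.

(* Subspaces of F^3 are represented canonically by <<A>>%MS (square 3x3
   matrices whose row space is the subspace). *)
Definition pg_points : {set 'M[F]_3} :=
  [set (<<A>>%MS : 'M[F]_3) | A : 'M[F]_3 & \rank A == 1%N].

Definition pg_lines : {set 'M[F]_3} :=
  [set (<<A>>%MS : 'M[F]_3) | A : 'M[F]_3 & \rank A == 2%N].

Definition pg_incident (P L : 'M[F]_3) : bool := (P <= L)%MS.

Definition blocking_set (S : {set 'M[F]_3}) : bool :=
  (S \subset pg_points) &&
  [forall L in pg_lines, [exists P in S, pg_incident P L]].

Definition minimal_blocking_set (S : {set 'M[F]_3}) : bool :=
  blocking_set S && [forall T : {set 'M[F]_3}, (T \proper S) ==> ~~ blocking_set T].

Definition nb_min_blocking (k : nat) : nat :=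
  #|[set S : {set 'M[F]_3} | minimal_blocking_set S & #|S| == k]|.
End PG.

(* Main.v *)
Require Import Defs.
From mathcomp Require Import all_boot all_order all_algebra all_field.
From mathcomp Require Import zify ring.
Set Implicit Arguments. Unset Strict Implicit. Unset Printing Implicit Defensive.
Import GRing.Theory Num.Theory.
Local Open Scope ring_scope.

Section PolyLemma.
Variable F : finFieldType.

Definition GG (s : seq (F * F)) : {poly {poly F}} :=
  \prod_(x <- s) ('X - (x.2%:P - x.1 *: 'X)%:P).
Definition HH (s : seq (F * F)) : {poly F} :=
  \prod_(x <- s) ('X - (- x.1)%:P).

Lemma HH_small s i : (size s < i)%N -> (HH s)`_i = 0.
Proof. by move=> hi; rewrite nth_default // /HH size_prod_XsubC. Qed.


Lemma coefGG s i j : (size s <= i + j)%N ->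
  ((GG s)`_i)`_j = if i + j == size s then (HH s)`_i else 0.
Proof.
elim: s i j => [|[a b] s IH] i j /=.
  move=> _; rewrite /GG /HH !big_nil !coefC.
  by case: i => [|i] //=; rewrite coefC; case: j.
move=> hij.
rewrite /GG /HH !big_cons -/(GG s) -/(HH s) /=.
rewrite mulrBl coefB coefXM coefCM coefB.
rewrite [in RHS]mulrBl coefB coefXM coefCM.
have -> : (b%:P - a *: 'X) * (GG s)`_i = b%:P * (GG s)`_i - a *: ('X * (GG s)`_i).
  by rewrite mulrBl scalerAl.
rewrite coefB coefCM coefZ coefXM.
case: i hij => [|i] hij /=.
  rewrite coef0 sub0r mulNr opprK.
  have hj : (size s < j)%N by rewrite add0n in hij.
  rewrite (IH 0%N j) ?add0n ?(ltnW hj) // (gtn_eqF hj) mulr0 sub0r opprK.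
  case: j hj hij => [|j] //= hj hij.
  rewrite (IH 0%N j) ?add0n // eqSS add0r.
  by case: eqP => _; rewrite ?mulr0 ?add0r.
rewrite (IH i j); last by lia.
rewrite (IH i.+1 j); last by lia. rewrite (_ : (i.+1 + j == size s) = false); last by lia. rewrite mulr0 sub0r.
rewrite (_ : (i.+1 + j == (size s).+1) = (i + j == size s)); last by lia.
rewrite mulNr !opprK.
case: j hij => [|j] hij /=.
  case: eqP => [e|_]; last by rewrite mulr0 addr0.
  rewrite (HH_small (_ : size s < i.+1)%N); last by lia.
  by rewrite !mulr0 !addr0.
rewrite (IH i.+1 j); last by lia.
rewrite (_ : (i.+1 + j == size s) = (i + j.+1 == size s)); last by lia.
case: eqP => _; last by rewrite mulr0 addr0.
by rewrite mulrC.
Qed.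

Definition Pu (s : seq (F * F)) (u : F) : {poly F} :=
  map_poly (horner_eval u) (GG s).

Lemma PuE s u : Pu s u = \prod_(x <- s) ('X - (x.2 - x.1 * u)%:P).
Proof.
rewrite /Pu /GG map_prod_XsubC; apply: eq_bigr => x _.
by rewrite /= horner_evalE !hornerE.
Qed.

Lemma coefPu s u i : (Pu s u)`_i = ((GG s)`_i).[u].
Proof. by rewrite /Pu coef_map. Qed.

Lemma size_Pu s u : size (Pu s u) = (size s).+1.
Proof. by rewrite PuE size_prod_XsubC. Qed.

Lemma HH_mid (s : seq (F * F)) :
  (forall m c, exists2 x, x \in s & x.2 = x.1 * m + c) ->
  (#|F| <= size s)%N /\
  (forall i, (size s - #|F| < i < #|F|)%N -> (HH s)`_i = 0).
Proof.
move=> cov.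
pose q := #|F|; pose n := size s.
pose W : {poly F} := 'X^q - 'X.
have factor u : exists Q : {poly F}, Pu s u = Q * W.
  have := @uniq_roots_prod_XsubC _ (Pu s u) (index_enum F).
  rewrite uniq_rootsE index_enum_uniq /W finField_genPoly.
  apply => //; apply/allP => c _.
  have [x xs e] := cov u c.
  rewrite /root PuE horner_prod prodf_seq_eq0; apply/hasP; exists x => //.
  by rewrite !hornerE e; apply/eqP; ring.
have q_gt1 : (1 < q)%N by rewrite /q finRing_gt1.
have sizeW : size W = q.+1.
  by rewrite /W size_polyDl ?size_polyXn // size_polyN size_polyX ltnS.
have lcW : lead_coef W = 1.
  by rewrite /W lead_coefDl ?lead_coefXn // size_polyN size_polyX size_polyXn ltnS.
have W0 : W != 0 by rewrite -size_poly_eq0 sizeW.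
have infoQ u : exists Q : {poly F}, [/\ Pu s u = Q * W, (q <= n)%N,
    size Q = (n - q).+1 & Q`_(n - q) = 1].
  have [Q eQ] := factor u; exists Q.
  have P0 : Pu s u != 0 by rewrite -size_poly_eq0 size_Pu.
  have Q0 : Q != 0 by apply: contraNneq P0 => Q0; rewrite eQ Q0 mul0r.
  have szQ := size_Pu s u; rewrite eQ size_mul // sizeW addnS /= in szQ.
  have sQ : (0 < size Q)%N by rewrite size_poly_gt0.
  have hq : (q <= n)%N by rewrite /n -ltnS -szQ -{1}(add0n q) ltn_add2r.
  have szQ' : size Q = (n - q).+1.
    move: szQ sQ; rewrite /n; clearbody q; move: (size Q) => a; lia.
  split => //.
  have := lead_coefM Q W; rewrite -eQ lcW mulr1.
  have /monicP -> : Pu s u \is monic by rewrite PuE monic_prod_XsubC.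
  by rewrite lead_coefE szQ' /= => <-.
have [Q0 [_ hqn _ _]] := infoQ 0.
split => // i /andP [hi1 hi2]; rewrite -/q -/n in hi1 hi2.
have hin : (i < n)%N by apply: leq_trans hi2 hqn.
pose d : F := - ((i.-1 == n - q)%N)%:R.
pose gam := (GG s)`_i - d%:P.
have gam_roots u : root gam u.
  have [Q [eQ _ szQ lQ]] := infoQ u.
  rewrite /root /gam hornerD hornerN hornerC -coefPu eQ /W mulrBr coefB.
  rewrite coefMXn coefMX hi2 (gtn_eqF (leq_ltn_trans (leq0n _) hi1)).
  rewrite sub0r /d opprK; apply/eqP.
  have [e|ne] := eqVneq i.-1 (n - q)%N.
    by rewrite e lQ /= addNr.
  rewrite addr0 nth_default ?oppr0 // szQ.
  move: hi1 ne; clearbody q n; lia.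
have gam0 : gam = 0.
  apply/eqP; apply: contraT => g0.
  have allr : all (root gam) (enum F) by apply/allP => u _; apply: gam_roots.
  have := max_poly_roots g0 allr (enum_uniq F).
  rewrite -cardE -/q ltnNge => /negP nh; exfalso; apply: nh; apply/leq_sizeP => j hj.
  rewrite /gam coefB coefC.
  have -> : ((GG s)`_i)`_j = 0.
    rewrite coefGG -/n; last by clearbody q n; lia.
    by rewrite (_ : (i + j == n) = false) //; clearbody q n; lia.
  case: eqP => [j0|_]; last by rewrite subr0.
  by move: hj q_gt1; rewrite j0; clearbody q n; lia.
have := @coefGG s i (n - i); rewrite -/n; case: eqP => [_|ne]; last by exfalso; apply: ne; exact: subnKC (ltnW hin).
move=> <-; last by rewrite subnKC // ltnW.
have : gam`_(n - i) = 0 by rewrite gam0 coef0.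
by rewrite /gam coefB coefC (_ : (n - i == 0)%N = false) ?subr0 //; clearbody q n; lia.
Qed.


Lemma cover_bound (s : seq (F * F)) :
  (forall m c, exists2 x, x \in s & x.2 = x.1 * m + c) ->
  (#|[set x.1 | x in s]| + #|F| <= size s + 1)%N.
Proof.
move=> cov; have [hqn mid] := HH_mid cov.
pose q := #|F|; pose n := size s; pose H := HH s.
rewrite -/q -/n in hqn mid *.
have Hn : H`_n = 1.
  have /monicP := monic_prod_XsubC s xpredT (fun x => - x.1).
  by rewrite lead_coefE size_prod_XsubC.
pose psi := take_poly q H + 'X * drop_poly q H.
have cpsi j : psi`_j = (if (j < q)%N then H`_j else 0) +
                       (if j == 0%N then 0 else H`_(j.-1 + q)).
  by rewrite /psi coefD coef_take_poly coefXM coef_drop_poly.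
have q_gt1 : (1 < q)%N by rewrite /q finRing_gt1.
have psi0 : psi != 0.
  apply/eqP => /(congr1 (fun p : {poly F} => p`_(n - q).+1)).
  rewrite cpsi coef0 /= subnK //.
  rewrite Hn; case: ifP => h.
    rewrite mid ?add0r; first by move/eqP; rewrite oner_eq0.
    by apply/andP; split => //; clearbody q n; lia.
  by rewrite add0r; move/eqP; rewrite oner_eq0.
have szpsi : (size psi <= (n - q).+2)%N.
  apply/leq_sizeP => j hj; rewrite cpsi.
  rewrite (_ : j == 0%N = false); last by clearbody q n; lia.
  rewrite (HH_small (_ : size s < j.-1 + q)%N); last by rewrite -/n; clearbody q n; lia.
  case: ifP => h; rewrite ?addr0 //.
  by rewrite mid //; apply/andP; split => //; clearbody q n; lia.
have psiE x : psi.[x] = H.[x].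
  rewrite -[in RHS](poly_take_drop q H) /psi !hornerE.
  by rewrite expf_card mulrC.
pose A := [set x.1 | x in s].
pose rs := [seq - a | a <- enum A].
have urs : uniq rs by rewrite map_inj_uniq ?enum_uniq //; apply: oppr_inj.
have rrs : all (root psi) rs.
  apply/allP => y /mapP [a]; rewrite mem_enum => /imsetP [x xs ->] ->.
  rewrite /root psiE /H /HH horner_prod prodf_seq_eq0; apply/hasP; exists x => //.
  by rewrite !hornerE subrr.
have := max_poly_roots psi0 rrs urs.
rewrite size_map -cardE => hA.
have := leq_trans hA szpsi.
rewrite -/A; move: hqn; clearbody q n A; move: #|A| => a h1 h2.
have : forall a n q : nat, (q <= n)%N -> (a < (n - q).+2)%N -> (a + q <= n + 1)%N by clear; lia.
exact.
Qed.

End PolyLemma.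

Section Geom.
Variable F : finFieldType.
Implicit Types (Q L : 'M[F]_3) (x : 'rV[F]_3) (f : 'cV[F]_3).

Definition rep Q : 'rV[F]_3 := nz_row Q.

Lemma ptsub x (M : 'M[F]_3) : (<<x>> <= M)%MS = (x <= M)%MS.
Proof. by rewrite genmxE. Qed.

Lemma pointP Q : Q \in pg_points F -> rep Q != 0 /\ Q = <<rep Q>>%MS.
Proof.
case/imsetP => A; rewrite inE => /eqP rA ->.
have r1 : \rank <<A>>%MS = 1%N by rewrite mxrank_gen.
have nz : rep <<A>>%MS != 0.
  by rewrite nz_row_eq0 -mxrank_eq0 r1.
split => //.
have sub := nz_row_sub <<A>>%MS.
have [_] := mxrank_leqif_eq sub; rewrite rank_rV nz r1 eqxx => /esym/eqmxP e.
by rewrite (eq_genmx e) genmx_id.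
Qed.

Lemma rank_cV f : \rank f = (f != 0).
Proof. by rewrite -mxrank_tr rank_rV trmx_eq0. Qed.

Lemma kerline f : f != 0 ->
  <<kermx f>>%MS \in pg_lines F /\ forall x, (x <= <<kermx f>>)%MS = (x *m f == 0).
Proof.
move=> f0; split; last by move=> x; rewrite genmxE sub_kermx.
by apply/imsetP; exists (kermx f) => //; rewrite inE mxrank_ker rank_cV f0.
Qed.

Lemma lineP L : L \in pg_lines F ->
  exists f, f != 0 /\ forall x, (x <= L)%MS = (x *m f == 0).
Proof.
case/imsetP => A; rewrite inE => /eqP rA ->.
pose K := kermx A^T.
have rK : \rank K = 1%N by rewrite mxrank_ker mxrank_tr rA.
exists (nz_row K)^T.
have nz : nz_row K != 0 by rewrite nz_row_eq0 -mxrank_eq0 rK.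
split; first by rewrite trmx_eq0.
have AK : (A <= kermx (nz_row K)^T)%MS.
  rewrite sub_kermx -trmx_eq0 trmx_mul trmxK -sub_kermx.
  exact: nz_row_sub.
have rk : \rank (kermx (nz_row K)^T) = 2%N.
  by rewrite mxrank_ker rank_cV trmx_eq0 nz.
have [_] := mxrank_leqif_eq AK; rewrite rA rk eqxx => /esym/eqmxP e.
by move=> x; rewrite genmxE e sub_kermx.
Qed.


Lemma pt_eq x Q : Q \in pg_points F -> x != 0 -> (x <= Q)%MS -> Q = <<x>>%MS.
Proof.
move=> /pointP [nz E] x0 xQ.
have rQ : \rank Q = 1%N by rewrite E mxrank_gen rank_rV nz.
have [_] := mxrank_leqif_eq xQ; rewrite rQ rank_rV x0 eqxx => /esym/eqmxP e.
by rewrite (eq_genmx e) {2}E genmx_id.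
Qed.

Definition dot x f : F := (x *m f) 0 0.

Lemma mul0E x f : (x *m f == 0) = (dot x f == 0).
Proof.
rewrite /dot; apply/eqP/eqP => [-> | h]; first by rewrite mxE.
by apply/matrixP => i j; rewrite !ord1 h mxE.
Qed.

Lemma dotD x f1 f2 : dot x (f1 + f2) = dot x f1 + dot x f2.
Proof. by rewrite /dot mulmxDr mxE. Qed.
Lemma dotN x f : dot x (- f) = - dot x f.
Proof. by rewrite /dot mulmxN mxE. Qed.
Lemma dotZ x a f : dot x (a *: f) = a * dot x f.
Proof. by rewrite /dot -scalemxAr mxE. Qed.
Lemma dotZl x a f : dot (a *: x) f = a * dot x f.
Proof. by rewrite /dot -scalemxAl mxE. Qed.

Lemma tangent (S : {set 'M[F]_3}) P : minimal_blocking_set S -> P \in S ->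
  exists2 L, L \in pg_lines F &
    (P <= L)%MS /\ forall Q, Q \in S -> (Q <= L)%MS -> Q = P.
Proof.
case/andP => bS /forallP minS PS.
have /negP nb := implyP (minS (S :\ P)) (properD1 PS).
case/andP: (bS) => sS /forall_inP bl.
have : ~~ [forall L in pg_lines F, [exists Q in S :\ P, pg_incident Q L]].
  apply/negP => H; apply: nb; apply/andP; split => //.
  by apply: subset_trans sS; apply: subD1set.
case/forall_inPn => L Ll /exists_inPn nQ.
exists L => //.
have [Q QS QL] := exists_inP (bl L Ll).
have tang : forall Q, Q \in S -> (Q <= L)%MS -> Q = P.
  move=> R RS RL; apply/eqP; apply: contraTT RL => RP; apply: nQ.
  by rewrite in_setD1 RP RS.
split => //; by rewrite -(tang Q QS QL).
Qed.


Lemma minpts (S : {set 'M[F]_3}) Q : minimal_blocking_set S -> Q \in S -> Q \in pg_points F.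
Proof. by case/andP => /andP [/subsetP sS _] _ /sS. Qed.

Lemma block (S : {set 'M[F]_3}) L : minimal_blocking_set S -> L \in pg_lines F ->
  exists2 Q, Q \in S & (Q <= L)%MS.
Proof.
case/andP => /andP [_ /forall_inP bl] _ Ll.
by have [Q QS QL] := exists_inP (bl L Ll); exists Q.
Qed.

Lemma arith1 (a q sp sd s : nat) :
  (a + q <= sp + 1)%N -> (1 + (q - a) <= sd)%N -> (a <= q)%N -> s = (1 + sp)%N ->
  (2 * q + 1 <= sd + s)%N.
Proof. lia. Qed.

Lemma key (S S' : {set 'M[F]_3}) P : minimal_blocking_set S -> minimal_blocking_set S' ->
  P \in S -> P \notin S' -> (2 * #|F| + 1 <= #|S' :\: S| + #|S|)%N.
Proof.
move=> mS mS' PS PS'.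
have [L Ll [PL tang]] := tangent mS PS.
have [f [f0 Lf]] := lineP Ll.
have Ppt := minpts mS PS.
have [p0 PE] := pointP Ppt.
set p := rep P in p0 PE.
have pf : dot p f = 0.
  by move: PL; rewrite PE ptsub Lf mul0E => /eqP.
pose Kp := kermx p^T.
have rKp : \rank Kp = 2%N by rewrite mxrank_ker mxrank_tr rank_rV p0.
have rf : \rank f^T = 1%N by rewrite mxrank_tr rank_cV f0.
have nKf : ~~ (Kp <= f^T)%MS.
  by apply/negP => /mxrankS; rewrite rKp rf.
have [i ni] := row_subPn nKf.
pose g := (row i Kp)^T.
have pg : dot p g = 0.
  have := row_sub i Kp; rewrite sub_kermx -[row i Kp]trmxK -trmx_mul trmx_eq0 -/g mul0E.
  by move/eqP.
have gnf : ~~ (g^T <= f^T)%MS by rewrite trmxK.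
have indep x : dot x f = 0 -> dot x g = 0 -> (x <= p)%MS.
  move=> xf xg.
  pose R := row_mx f g.
  have rR : \rank R = 2%N.
    have lt : (f^T < f^T + g^T)%MS.
      rewrite ltmxE addsmxSl /=.
      by apply: contra gnf; apply: submx_trans; apply: addsmxSr.
    have := rank_ltmx lt; rewrite rf => lt2.
    apply/eqP; rewrite eqn_leq rank_leq_col /= -mxrank_tr tr_row_mx -addsmxE.
    exact: lt2.
  have kerR y : dot y f = 0 -> dot y g = 0 -> (y <= kermx R)%MS.
    move=> yf yg; rewrite sub_kermx mul_mx_row.
    move: yf yg => /eqP; rewrite -mul0E => /eqP -> /eqP; rewrite -mul0E => /eqP ->.
    by rewrite row_mx0.
  have pR := kerR p pf pg.
  have [_] := mxrank_leqif_eq pR.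
  rewrite rank_rV p0 mxrank_ker rR eqxx => /esym/eqmxP e.
  by rewrite e; apply: kerR.
have [j pj] : exists j, p 0 j != 0.
  case: (pickP (fun j => p 0 j != 0)) => [j pj | H]; first by exists j.
  exfalso; move/negP: p0; apply; apply/eqP/matrixP => a b.
  by rewrite ord1 mxE; move: (H b) => /= /negbFE /eqP.
pose h : 'cV[F]_3 := (p 0 j)^-1 *: delta_mx j 0.
have ph : dot p h = 1.
  by rewrite dotZ /dot -colE mxE mulVf.
pose fQ Q := dot (rep Q) f.
pose aQ Q := dot (rep Q) g / fQ Q.
pose bQ Q := dot (rep Q) h / fQ Q.
pose X := [seq (aQ Q, bQ Q) | Q <- enum (S :\ P)].
have cov m c : exists2 x, x \in X & x.2 = x.1 * m + c.
  pose psi := h - m *: g - c *: f.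
  have dpsi y : dot y psi = dot y h - m * dot y g - c * dot y f.
    by rewrite /psi !dotD !dotN !dotZ.
  have psi0 : psi != 0.
    apply/eqP => e; have := dpsi p; rewrite e /dot mulmx0 mxE -/(dot p h).
    by rewrite -!/(dot p _) pg pf ph !mulr0 !subr0 => /eqP; rewrite eq_sym oner_eq0.
  have [Lpl lpsi] := kerline psi0.
  have [Q QS QL] := block mS Lpl.
  have [qn QE] := pointP (minpts mS QS).
  move: QL; rewrite QE ptsub lpsi mul0E dpsi => QL.
  have QP : Q != P.
    apply/eqP => e; move: QL; rewrite e -/p pg pf ph !mulr0 !subr0.
    by rewrite oner_eq0.
  have fq : fQ Q != 0.
    apply/eqP => e; move/eqP: QP; apply; apply: tang => //.
    by rewrite QE ptsub Lf mul0E; apply/eqP.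
  exists (aQ Q, bQ Q).
    by apply: map_f; rewrite mem_enum in_setD1 QP QS.
  rewrite /aQ /bQ /= -/(fQ Q).
  have -> : dot (rep Q) h = m * dot (rep Q) g + c * fQ Q.
    by apply/eqP; rewrite -subr_eq0 opprD addrA.
  by field.
have cb := cover_bound cov.
have szX : size X = #|S :\ P| by rewrite size_map -cardE.
pose A := [set x.1 | x in X].
pose gm Q := if fQ Q == 0 then None else Some (aQ Q).
have sub : None |: [set Some c | c in ~: A] \subset gm @: (S' :\: S).
  apply/subsetP => o; rewrite in_setU1 => /orP [/eqP -> | /imsetP [c cA ->]].
    have [Q QS' QL] := block mS' Ll.
    have [qn QE] := pointP (minpts mS' QS').
    apply/imsetP; exists Q.
      rewrite in_setD QS' andbT; apply/negP => QS.
      by move: PS'; rewrite -(tang Q QS QL) QS'.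
    by move: QL; rewrite {1}QE ptsub Lf mul0E => /eqP e; rewrite /gm /fQ e eqxx.
  pose phi := g - c *: f.
  have phi0 : phi != 0.
    apply/eqP => /subr0_eq e; move: gnf; rewrite e.
    by rewrite linearZ /= scalemx_sub.
  have [Vl lphi] := kerline phi0.
  have [Q QS' QV] := block mS' Vl.
  have Qpt := minpts mS' QS'.
  have [qn QE] := pointP Qpt.
  move: QV; rewrite QE ptsub lphi mul0E dotD dotN dotZ subr_eq0 => /eqP QV.
  have fq : fQ Q != 0.
    apply/eqP => e.
    have hp : (rep Q <= P)%MS.
      apply: submx_trans (indep _ e _) _; first by rewrite QV -/(fQ Q) e mulr0.
      by rewrite PE genmxE.
    by move: PS'; rewrite (pt_eq Ppt qn hp) -QE QS'.
  have aQc : aQ Q = c by rewrite /aQ QV -/(fQ Q) mulfK.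
  apply/imsetP; exists Q.
    rewrite in_setD QS' andbT; apply/negP => QS.
    move: cA; rewrite in_setC => /negP; apply.
    apply/imsetP; exists (aQ Q, bQ Q) => //.
    apply: map_f; rewrite mem_enum in_setD1 QS andbT.
    by apply: contraNneq PS' => <-.
  by rewrite /gm (negbTE fq) aQc.
have c1 := subset_leq_card sub.
rewrite cardsU1 card_imset in c1; last by move=> ? ? [].
have c2 := leq_trans c1 (leq_imset_card _ _).
have cA := cardsC A.
rewrite (_ : (None \notin [set Some c | c in ~: A]) = true) in c2; last first.
  by apply/imsetP => -[].
rewrite (_ : #|~: A| = #|F| - #|A|)%N in c2; last by rewrite -cA addKn.
apply: arith1 cb c2 (max_card _) _.
by rewrite szX (cardsD1 P S) PS.
Qed.


Definition i0 : 'I_3 := @Ordinal 3 0 isT.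
Definition i1 : 'I_3 := @Ordinal 3 1 isT.
Definition i2 : 'I_3 := @Ordinal 3 2 isT.

Definition cv (x : 'rV[F]_3) : (F * F) + (F + unit) :=
  if x 0 i0 != 0 then inl (x 0 i1 / x 0 i0, x 0 i2 / x 0 i0)
  else if x 0 i1 != 0 then inr (inl (x 0 i2 / x 0 i1)) else inr (inr tt).

Lemma rV3P (x y : 'rV[F]_3) :
  x 0 i0 = y 0 i0 -> x 0 i1 = y 0 i1 -> x 0 i2 = y 0 i2 -> x = y.
Proof.
move=> e0 e1 e2; apply/rowP => i; case: i => [[|[|[|//]]] hi].
- by rewrite (_ : Ordinal hi = i0) //; apply: val_inj.
- by rewrite (_ : Ordinal hi = i1) //; apply: val_inj.
- by rewrite (_ : Ordinal hi = i2) //; apply: val_inj.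
Qed.

Lemma cv_inj (x y : 'rV[F]_3) : x != 0 -> y != 0 -> cv x = cv y ->
  exists2 l : F, l != 0 & y = l *: x.
Proof.
move=> x0 y0; rewrite /cv.
have [a0|a0] := eqVneq (x 0 i0) 0; have [b0|b0] := eqVneq (y 0 i0) 0 => //=; try by case; try by case: ifP => _ [].
- have [a1|a1] := eqVneq (x 0 i1) 0; have [b1|b1] := eqVneq (y 0 i1) 0 => //=; try by case.
  + move=> _.
    have a2 : x 0 i2 != 0.
      apply: contraNneq x0 => a2; apply/eqP; apply: rV3P; by rewrite mxE.
    have b2 : y 0 i2 != 0.
      apply: contraNneq y0 => b2; apply/eqP; apply: rV3P; by rewrite mxE.
    exists (y 0 i2 / x 0 i2); first by rewrite mulf_neq0 ?invr_eq0.
    by apply: rV3P; rewrite mxE ?a0 ?b0 ?a1 ?b1 ?mulr0 // mulfVK.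
  + case=> e.
    exists (y 0 i1 / x 0 i1); first by rewrite mulf_neq0 ?invr_eq0.
    apply: rV3P; rewrite mxE ?a0 ?b0 ?mulr0 ?mulfVK //.
    by rewrite -mulrA (mulrC _ (x 0 i2)) e mulrC mulfVK.
- case=> e1 e2.
  exists (y 0 i0 / x 0 i0); first by rewrite mulf_neq0 ?invr_eq0.
  apply: rV3P; rewrite mxE ?mulfVK //.
    by rewrite -mulrA (mulrC _ (x 0 i1)) e1 mulrC mulfVK.
  by rewrite -mulrA (mulrC _ (x 0 i2)) e2 mulrC mulfVK.
Qed.

Lemma card_points : (#|pg_points F| <= #|F| ^ 2 + #|F| + 1)%N.
Proof.
have inj : {in pg_points F &, injective (fun Q => cv (rep Q))}.
  move=> Q1 Q2 /pointP [n1 E1] /pointP [n2 E2] /(cv_inj n1 n2) [l l0 e].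
  by rewrite E1 E2 e (eq_genmx (eqmx_scale _ l0)).
rewrite -(card_in_imset inj).
apply: leq_trans (max_card _) _.
by rewrite card_sum card_prod card_sum card_unit expnS expn1 addnA.
Qed.

End Geom.

Lemma arith3 (k q : nat) : (q <= k)%N -> (k <= 2 * q)%N -> (2 * k - 2 * q <= k)%N.
Proof. lia. Qed.

Lemma arith2 (m k q i d : nat) : (q <= k)%N -> (k <= 2 * q)%N -> m = (2 * k - 2 * q)%N ->
  (m <= i)%N -> (i + d)%N = k -> (2 * q + 1 <= d + k)%N -> False.
Proof. lia. Qed.

Unset Implicit Arguments.

Theorem theorem2 (F : finFieldType) (k : nat) :
  (#|F| <= k <= 2 * #|F|)%N ->
  (nb_min_blocking F k)%:R
    <= ('C(#|F| ^ 2 + #|F| + 1, 2 * k - 2 * #|F|)%:R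
        / 'C(k, 2 * k - 2 * #|F|)%:R :> rat).
Proof.
move=> /andP [hk1 hk2].
set q := #|F|; set m := (2 * k - 2 * q)%N.
have hmk : (m <= k)%N by apply: arith3.
have Cpos : (0 < 'C(k, m))%N by rewrite bin_gt0.
suff H : (nb_min_blocking F k * 'C(k, m) <= 'C(q ^ 2 + q + 1, m))%N.
  by rewrite ler_pdivlMr ?ltr0n // -natrM ler_nat.
rewrite /nb_min_blocking.
set M := [set S | minimal_blocking_set S & #|S| == k].
pose D (S : {set 'M[F]_3}) := [set T : {set 'M[F]_3} | T \subset S & #|T| == m].
have e1 : (#|M| * 'C(k, m) = \sum_(S in M) \sum_(T in D S) 1)%N.
  rewrite -sum_nat_const; apply: eq_bigr => S; rewrite inE => /andP [_ /eqP <-].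
  by rewrite sum1_card cards_draws.
rewrite e1 pair_big_dep /= sum1dep_card.
set Pairs := [set _ | _].
have inj : {in Pairs &, injective (fun p : {set 'M[F]_3} * {set 'M[F]_3} => p.2)}.
  move=> [S1 T1] [S2 T2]; rewrite !inE /= => /andP [MS1 /andP [TS1 /eqP cT1]].
  move=> /andP [MS2 /andP [TS2 _]] eT; rewrite -eT in TS2 *.
  move: MS1 MS2 => /andP [mS1 /eqP c1] /andP [mS2 /eqP c2].
  congr (_, _); apply/eqP; apply: contraT => ne.
  have nsub : ~~ (S1 \subset S2).
    by apply: contra ne => sub; rewrite eqEcard sub c1 c2 /=.
  have [P PS1 PS2] := subsetPn nsub.
  have := key mS1 mS2 PS1 PS2.
  have := cardsID S1 S2.
  have TI : (m <= #|S2 :&: S1|)%N.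
    by rewrite -cT1; apply: subset_leq_card; rewrite subsetI TS1 TS2.
  rewrite c1 c2 => cI ky.
  by rewrite -/q in ky; case: (arith2 hk1 hk2 (erefl m) TI cI ky).
rewrite -(card_in_imset inj).
apply: leq_trans (_ : #|[set T : {set 'M[F]_3} | T \subset pg_points F & #|T| == m]| <= _)%N.
  apply: subset_leq_card; apply/subsetP => T /imsetP [[S T'] + ->].
  rewrite !inE /= => /andP [/andP [mS _] /andP [TS ->]]; rewrite andbT.
  apply: subset_trans TS _.
  by case/andP: mS => /andP [].
by rewrite cards_draws leq_bin2l // card_points.
Qed.
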